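(* Let $T>0$, $N\ge1$, and $p\in L^2([0,T])$. Then $$\sum_{n=0}^{N-1}(2n+1)\Big(\int_0^T p(t)\tilde L_n(t)\,dt\Big)^2\;\le\;N^3\sum_{j=1}^N r_j\Big(\int_0^T p(t)\psi_j^{(1)}(t)\,dt\Big)^2,\qquad r_j:=N^{-3}\sum_{k=j}^N k(2k-1).$$
   Context: $L_n$ is the $n$-th Legendre polynomial on $[-1,1]$ (normalized by $L_n(1)=1$) and $\tilde L_n(t):=L_n(\tfrac{2t}{T}-1)$ for $t\in[0,T]$. Define $\psi_1^{(1)}:=\tilde L_0\equiv1$ and $\psi_n^{(1)}:=\tilde L_{n-1}-\tilde L_{n-2}$ for $n\ge2$. *)

(* Defs.v *)
From HB Require Import structures.
From mathcomp Require Import all_boot all_order all_algebra.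
From mathcomp Require Import all_classical all_reals all_analysis.
Set Implicit Arguments. Unset Strict Implicit. Unset Printing Implicit Defensive.
Import Order.TTheory GRing.Theory Num.Theory.
Local Open Scope ring_scope.
Local Open Scope classical_set_scope.

Section Legendre.
Variable R : realType.

(* leg_pair n x = (L_n x, L_{n+1} x), via Bonnet's recurrence
   (n+2) L_{n+2} = (2n+3) x L_{n+1} - (n+1) L_n,  L_0 = 1, L_1 = x. *)
Fixpoint leg_pair (n : nat) (x : R) : R * R :=
  match n with
  | 0 => (1, x)
  | n'.+1 => let: (a, b) := leg_pair n' x in
             (b, ((2 * n' + 3)%:R * x * b - (n'.+1)%:R * a) / (n'.+2)%:R)
  end.

Definition legendre (n : nat) (x : R) : R := (leg_pair n x).1.

Definition shifted_legendre (T : R) (n : nat) (t : R) : R :=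
  legendre n (2 * t / T - 1).

(* psi_n^(1): psi_1 = 1, psi_n = Ltilde_{n-1} - Ltilde_{n-2} for n >= 2
   (value at n = 0 is irrelevant; only n >= 1 is used). *)
Definition psi1 (T : R) (n : nat) (t : R) : R :=
  if (n <= 1)%N then 1
  else shifted_legendre T n.-1 t - shifted_legendre T n.-2 t.

Definition L2_on (T : R) (p : R -> R) : Prop :=
  measurable_fun `[0%R, T] p /\
  (\int[lebesgue_measure]_(t in `[0%R, T]) ((p t) ^+ 2)%:E < +oo)%E.

End Legendre.

(* Main.v *)
From HB Require Import structures.
From mathcomp Require Import all_boot all_order all_algebra.
From mathcomp Require Import all_classical all_reals all_analysis.
From mathcomp Require Import ring lra zify measurable_realfun.
Require Import Defs.
Import Order.TTheory GRing.Theory Num.Theory numFieldNormedType.Exports.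
Local Open Scope ring_scope.
Local Open Scope classical_set_scope.

Lemma leg_pairS (R : realType) n (x : R) : leg_pair n.+1 x =
  ((leg_pair n x).2,
   ((2 * n + 3)%:R * x * (leg_pair n x).2 - (n.+1)%:R * (leg_pair n x).1) / (n.+2)%:R).
Proof. by rewrite /=; case: leg_pair. Qed.

Section C.
Variable R : realType.
Lemma cM (f g : R -> R) : continuous f -> continuous g -> continuous (fun x => f x * g x).
Proof. by move=> cf cg x; exact: (continuousM (cf x) (cg x)). Qed.
Lemma cB (f g : R -> R) : continuous f -> continuous g -> continuous (fun x => f x - g x).
Proof. by move=> cf cg x; exact: (continuousB (cf x) (cg x)). Qed.
Lemma cC (c : R) : continuous (fun _ : R => c).
Proof. by move=> x; exact: cst_continuous. Qed.
Lemma cI : continuous (fun x : R => x).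
Proof. by move=> x; exact: cvg_id. Qed.
End C.

Lemma leg_cont (R : realType) n :
  continuous (fun x : R => (leg_pair n x).1) /\ continuous (fun x : R => (leg_pair n x).2).
Proof.
elim: n => [|n [hA hB]].
  by split; [exact: cst_continuous | move=> x; exact: cvg_id].
split.
  by under eq_fun do rewrite leg_pairS.
under eq_fun do rewrite leg_pairS /=.
apply: cM; last exact: cC.
apply: cB; apply: cM; try exact: cC; try exact: hA; try exact: hB.
apply: cM; [exact: cC | exact: cI].
Qed.

Lemma sleg_cont (R : realType) (T : R) n : continuous (shifted_legendre T n).
Proof.
have cf : continuous (fun t : R => 2 * t / T - 1).
  apply: cB; last exact: cC.
  apply: cM; last exact: cC.
  apply: cM; [exact: cC | exact: cI].
have cg := proj1 (leg_cont R n).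
move=> t; exact: (continuous_comp (cf t) (cg _)).
Qed.

Lemma int_pL (R : realType) (T : R) (p : R -> R) (L : R -> R) : 0 < T -> L2_on T p ->
  continuous L ->
  lebesgue_measure.-integrable `[0, T] (EFin \o (fun t => p t * L t)).
Proof.
move=> T0 [mp ip] cL.
have mD : measurable (`[0, T] : set R) by exact: measurable_itv.
have cL2 : continuous (fun t => L t ^+ 2).
  have -> : (fun t => L t ^+ 2) = (fun t => L t * L t) by apply/funext => t; rewrite expr2.
  exact: (@cM R _ _ cL cL).
have [c cD Mc] := @EVT_max R (fun t => L t ^+ 2) 0 T (ltW T0)
   (continuous_subspaceT cL2).
set M := L c ^+ 2.
have M0 : 0 <= M by exact: sqr_ge0.
have mL : measurable_fun `[0, T] L.
  exact: measurable_funTS (measurable_realfun.continuous_measurable_fun cL).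
eapply (@le_integrable _ _ R lebesgue_measure _ mD (EFin \o (fun t => p t * L t)) (EFin \o (fun t => p t ^+ 2 + M))).
- by apply/measurable_EFinP; exact: measurable_funM.
- move=> t Dt /=. rewrite lee_fin.
  rewrite (ger0_norm (addr_ge0 (sqr_ge0 (p t)) M0)).
  have := Mc t Dt; rewrite -/M => h.
  rewrite ler_norml; apply/andP; split; nra.
have -> : EFin \o (fun t => p t ^+ 2 + M) =
   (EFin \o (fun t => p t ^+ 2)) \+ (EFin \o cst M) by apply/funext.
apply: integrableD => //.
  apply/integrableP; split.
    by apply/measurable_EFinP; exact: measurable_funX.
  by under eq_integral => t _ do rewrite abse_EFin ger0_norm ?sqr_ge0//.
apply: continuous_compact_integrable; first exact: segment_compact.
exact: continuous_subspaceT (@cC R M).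
Qed.

Lemma cs_sum (R : realType) (b : nat -> R) (m : nat) :
  (\sum_(1 <= j < m.+1) b j) ^+ 2 <= m%:R * \sum_(1 <= j < m.+1) b j ^+ 2.
Proof.
elim: m => [|m IH]; first by rewrite big_geq // expr0n /= mul0r.
case: m IH => [_|m IH]; first by rewrite !big_nat1 mul1r.
rewrite big_nat_recr //= [in X in _ <= X]big_nat_recr //=.
set S := \sum_(1 <= j < m.+2) b j in IH *.
set Q := \sum_(1 <= j < m.+2) b j ^+ 2 in IH *.
have Q0 : 0 <= Q by rewrite /Q; apply: sumr_ge0 => i _; exact: sqr_ge0.
have m0 : (0 : R) < m.+1%:R by rewrite ltr0n.
rewrite -natr1.
set M := m.+1%:R in m0 IH *.
set x := b m.+2.
have h : 0 <= S ^+ 2 - 2 * M * S * x + M ^+ 2 * x ^+ 2.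
  have := sqr_ge0 (S - M * x); congr (_ <= _); ring.
have h2 : M * (2 * S * x) <= M * (Q + M * x ^+ 2).
  have -> : M * (2 * S * x) = 2 * M * S * x by ring.
  have -> : M * (Q + M * x ^+ 2) = M * Q + M ^+ 2 * x ^+ 2 by ring.
  lra.
have h3 : 2 * S * x <= Q + M * x ^+ 2 by rewrite -(ler_pM2l m0).
nra.
Qed.

Lemma alg (R : realType) (b : nat -> R) (N : nat) :
  \sum_(0 <= n < N) (2 * n + 1)%:R * (\sum_(1 <= j < n.+2) b j) ^+ 2
  <= \sum_(1 <= j < N.+1) (\sum_(j <= k < N.+1) (k * (2 * k - 1))%:R) * b j ^+ 2.
Proof.
elim: N => [|N IH]; first by rewrite !big_geq.
rewrite big_nat_recr //=.
have -> : \sum_(1 <= j < N.+2) (\sum_(j <= k < N.+2) (k * (2 * k - 1))%:R) * b j ^+ 2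
   = \sum_(1 <= j < N.+1) (\sum_(j <= k < N.+1) (k * (2 * k - 1))%:R) * b j ^+ 2
     + (N.+1 * (2 * N.+1 - 1))%:R * \sum_(1 <= j < N.+2) b j ^+ 2.
  rewrite [LHS]big_nat_recr //= big_nat1 big_distrr /=.
  rewrite [X in _ = _ + X]big_nat_recr //= addrA -big_split /=; congr (_ + _).
  apply: eq_big_nat => j /andP[j1 jN].
  by rewrite big_nat_recr //= 1?mulrDl // ltnW.
have e : (N.+1 * (2 * N.+1 - 1))%:R = (N.+1)%:R * (2 * N + 1)%:R :> R.
  by rewrite -natrM; congr (_%:R); lia.
rewrite e (mulrC (N.+1)%:R) -mulrA; apply: lerD => //.
apply: ler_wpM2l; first by rewrite ler0n.
exact: cs_sum.
Qed.

Theorem mainTheorem2 (R : realType) (T : R) (N : nat) (p : R -> R) :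
  0 < T -> (1 <= N)%N -> L2_on T p ->
  \sum_(0 <= n < N)
      (2 * n + 1)%:R *
      (Rintegral lebesgue_measure `[0, T]
         (fun t => p t * shifted_legendre T n t)) ^+ 2
  <= (N ^ 3)%:R *
     \sum_(1 <= j < N.+1)
       ((N ^ 3)%:R^-1 * (\sum_(j <= k < N.+1) (k * (2 * k - 1))%:R)) *
       (Rintegral lebesgue_measure `[0, T]
          (fun t => p t * psi1 T j t)) ^+ 2.
Proof.
move=> T0 N1 pL2.
set a := fun n => Rintegral lebesgue_measure `[0, T]
         (fun t => p t * shifted_legendre T n t).
set b := fun j => Rintegral lebesgue_measure `[0, T]
          (fun t => p t * psi1 T j t).
have mD : measurable (`[0, T] : set R) by exact: measurable_itv.
have ab : forall n, a n = \sum_(1 <= j < n.+2) b j.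
  elim=> [|n IH].
    rewrite big_nat1 /a /b; congr (Rintegral _ _ _); by apply/funext.
  rewrite big_nat_recr //= -IH.
  have -> : b n.+2 = a n.+1 - a n.
    rewrite /b /a -RintegralB //.
      congr (Rintegral _ _ _); apply/funext => t.
      by rewrite /psi1 /= mulrBr.
    - exact: (@int_pL R T p _ T0 pL2 (@sleg_cont R T n.+1)).
    - exact: (@int_pL R T p _ T0 pL2 (@sleg_cont R T n)).
  by rewrite addrC subrK.
have NZ : (N ^ 3)%:R != 0 :> R by rewrite pnatr_eq0 -lt0n expn_gt0 N1.
rewrite big_distrr /=.
rewrite [X in _ <= X](eq_bigr (fun j => (\sum_(j <= k < N.+1) (k * (2 * k - 1))%:R) * b j ^+ 2)); last first.
  by move=> i _; rewrite !mulrA mulfV // mul1r.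
apply: (le_trans _ (alg R b N)); rewrite le_eqVlt; apply/orP; left; apply/eqP.
by apply: eq_big_nat => n _; rewrite -ab.
Qed.
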